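(* Let $\mathcal{G}=\{G_n\}$ be a graph sequence and $p$ a prime. Then $\beta_{\mathbb{Q}}(\mathcal{G})\le\beta_{\mathbb{F}_p}(\mathcal{G})\le c(\mathcal{G})-1$.
   Context: A graph sequence is a sequence $\mathcal{G}=\{G_n\}$ of finite simple graphs with uniformly bounded vertex degrees and $|V(G_n)|\to\infty$. For graph sequences with $V(H_n)=V(G_n)$, $\mathcal{H}\prec\mathcal{G}$ means there is an integer $L>0$ with $d_{G_n}(x,y)\le L\,d_{H_n}(x,y)$ for all $n,x,y$ (shortest path metrics), and $\mathcal{G}\simeq\mathcal{H}$ means $\mathcal{H}\prec\mathcal{G}$ and $\mathcal{G}\prec\mathcal{H}$. $e(\mathcal{G})=\liminf_n |E(G_n)|/|V(G_n)|$, $c(\mathcal{G})=\inf_{\mathcal{H}\simeq\mathcal{G}}e(\mathcal{H})$. For a field $K$ and finite graph $G$, $\varepsilon_K(G)$ is the $K$-vector space spanned by oriented edges with $(x,y)=-(y,x)$; a cycle $(x_1,\dots,x_m,x_1)$ gives the vector $\sum_{i=1}^{m-1}(x_i,x_{i+1})+(x_m,x_1)$; $C^q_K(G)$ is the subspace spanned by vectors of cycles of length at most $q$. $s^q_K(\mathcal{G})=\liminf_n \frac{|E(G_n)|-\dim_K C^q_K(G_n)}{|V(G_n)|}-1$, $\beta_K(\mathcal{G})=\inf_q s^q_K(\mathcal{G})$. $\mathbb{F}_p$ is the field with $p$ elements. *)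

(* Defs.v *)
From HB Require Import structures.
From mathcomp Require Import all_boot all_order all_algebra.
From mathcomp Require Import all_classical all_reals.
From mathcomp Require Import ereal sequences.

Set Implicit Arguments.
Unset Strict Implicit.
Unset Printing Implicit Defensive.

Import Order.TTheory GRing.Theory Num.Theory.
Local Open Scope classical_set_scope.
Local Open Scope ring_scope.

Definition adj_seq (N : nat -> nat) := forall n : nat, rel 'I_(N n).

Definition is_graph_seq (N : nat -> nat) (adj : adj_seq N) : Prop :=
  [/\ (forall n, symmetric (adj n)),
      (forall n, irreflexive (adj n)),
      (exists D : nat, forall n (x : 'I_(N n)), (#|[set y | adj n x y]| <= D)%N)
    & (forall M : nat, exists n0, forall n, (n0 <= n)%N -> (M <= N n)%N)].

(* d_e(x,y) <= k  (shortest-path metric, possibly infinite) *)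
Definition dist_le (T : finType) (e : rel T) (x y : T) (k : nat) : Prop :=
  exists s : seq T, [/\ (size s <= k)%N, path e x s & last x s = y].

Definition gprec (N : nat -> nat) (H G : adj_seq N) : Prop :=
  exists L : nat, (0 < L)%N /\
    forall n (x y : 'I_(N n)) (k : nat),
      dist_le (H n) x y k -> dist_le (G n) x y (L * k).

Definition gequiv (N : nat -> nat) (G H : adj_seq N) : Prop :=
  gprec H G /\ gprec G H.

(* undirected edge set, each edge counted once *)
Definition edges (m : nat) (e : rel 'I_m) : {set 'I_m * 'I_m} :=
  [set p | e p.1 p.2 && (p.1 < p.2)%N].

Section WithR.
Variable R : realType.

Definition edge_density (N : nat -> nat) (adj : adj_seq N) : \bar R :=
  limn_einf (fun n => ((#|edges (adj n)|%:R / (N n)%:R : R))%:E).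

Definition cost (N : nat -> nat) (adj : adj_seq N) : \bar R :=
  ereal_inf [set edge_density H | H in
               [set H : adj_seq N | is_graph_seq H /\ gequiv adj H]].

Section Cycles.
Variable K : fieldType.

(* the oriented edge (x,y) in ε_K(G), realised inside 'M[K]_m as the
   antisymmetric matrix E_xy - E_yx, so that (x,y) = -(y,x) *)
Definition oedge (m : nat) (x y : 'I_m) : 'M[K]_m :=
  delta_mx x y - delta_mx y x.

Definition is_cycle (m l : nat) (e : rel 'I_m) (c : l.-tuple 'I_m) : bool :=
  [&& (3 <= l)%N, uniq c & cycle e c].

Definition cycle_vec (m l : nat) (c : l.-tuple 'I_m) : 'M[K]_m :=
  \sum_(i < l) oedge (nth (tnth_default c i) c i)
                     (nth (tnth_default c i) c (i.+1 %% l)).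

(* C^q_K(G) as a row space (vectors flattened by mxvec) *)
Definition cycle_space (m q : nat) (e : rel 'I_m) :=
  (\sum_(l < q.+1) \sum_(c : l.-tuple 'I_m | is_cycle e c)
      <<mxvec (cycle_vec c)>>)%MS.

Definition dim_cycle_space (m q : nat) (e : rel 'I_m) : nat :=
  \rank (cycle_space q e).

Definition sq (N : nat -> nat) (adj : adj_seq N) (q : nat) : \bar R :=
  limn_einf (fun n => (((#|edges (adj n)|%:R - (dim_cycle_space q (adj n))%:R)
                        / (N n)%:R : R))%:E) - 1%E.

Definition betaK (N : nat -> nat) (adj : adj_seq N) : \bar R :=
  ereal_inf [set sq adj q | q in [set: nat]].

End Cycles.
End WithR.

(* Main.v *)
Require Import Defs.
From HB Require Import structures.
From mathcomp Require Import all_boot all_order all_algebra.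
From mathcomp Require Import all_classical all_reals.
From mathcomp Require Import ereal sequences.
From mathcomp Require Import topology normedtype.
From mathcomp Require Import zify.

Set Implicit Arguments.
Unset Strict Implicit.
Unset Printing Implicit Defensive.
Import Order.TTheory GRing.Theory Num.Theory.

Local Open Scope ring_scope.

Lemma rank_map_int (F : fieldType) r k (A : 'M[int]_(r, k)) :
  (\rank (map_mx (intr : int -> F) A) <= \rank (map_mx (intr : int -> rat) A))%N.
Proof.
set Ap := map_mx _ A.
pose f := maxrankfun Ap.
have hB : row_full (rowsub f Ap)^T.
  by rewrite /row_full mxrank_tr; have /eqP -> := maxrowsub_free Ap.
pose g := fullrankfun hB.
pose C := rowsub g (rowsub f A)^T.
have eC : rowsub g (rowsub f Ap)^T = map_mx intr C.
  by apply/matrixP => i j; rewrite !mxE.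
have hu := fullrowsub_unit hB.
rewrite -/g eC unitmxE det_map_mx unitfE in hu.
have dC : \det C != 0 by apply: contraNneq hu => ->; rewrite rmorph0.
have huQ : map_mx (intr : int -> rat) C \in unitmx.
  by rewrite unitmxE det_map_mx unitfE intr_eq0.
have -> : \rank Ap = \rank (map_mx (intr : int -> rat) C).
  by rewrite (mxrank_unit huQ).
set AQ := map_mx _ A.
have eCQ : map_mx (intr : int -> rat) C = rowsub g (rowsub f AQ)^T.
  by apply/matrixP => i j; rewrite !mxE.
rewrite eCQ; apply: leq_trans (mxrankS (rowsub_sub _ _)) _.
by rewrite mxrank_tr; apply: mxrankS; apply: rowsub_sub.
Qed.

Lemma rank_seq_map (F : fieldType) k (s : seq 'rV[int]_k) :
  \rank (\sum_(w <- s) <<map_mx (intr : int -> F) w>>)%MS =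
  \rank (map_mx (intr : int -> F) (\matrix_(i < size s) nth 0 s i)).
Proof.
apply/eqP; rewrite eqn_leq; apply/andP; split; apply: mxrankS.
  rewrite (big_nth 0) big_mkord; apply/sumsmx_subP => i _.
  rewrite genmxE.
  set M := (\matrix_(i < size s) nth 0 s i).
  have -> : map_mx (intr : int -> F) (nth 0 s i) = row i (map_mx intr M) by rewrite -map_row rowK.
  exact: row_sub.
apply/row_subP => i; rewrite -map_row rowK (big_nth 0) big_mkord.
by apply: (sumsmx_sup i) => //; rewrite genmxE.
Qed.

Definition icvec m l (c : l.-tuple 'I_m) : 'M[int]_m :=
  \sum_(i < l) (delta_mx (nth (tnth_default c i) c i) (nth (tnth_default c i) c (i.+1 %% l))
     - delta_mx (nth (tnth_default c i) c (i.+1 %% l)) (nth (tnth_default c i) c i)).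

Lemma icvecE (F : fieldType) m l (c : l.-tuple 'I_m) :
  map_mx (intr : int -> F) (icvec c) = cycle_vec F c.
Proof.
rewrite /icvec /cycle_vec (big_morph _ (@map_mxD _ _ _ _ _) (map_mx0 _ _ _)).
by apply: eq_bigr => i _; rewrite map_mxB !map_delta_mx.
Qed.

Definition cyc_list m q (e : rel 'I_m) : seq 'rV[int]_(m * m) :=
  flatten [seq [seq mxvec (icvec c) | c <- [seq c <- index_enum (l.-tuple 'I_m)%type | is_cycle e c]]
          | l : 'I_q.+1 <- index_enum 'I_q.+1].

Lemma cycle_spaceE (F : fieldType) m q (e : rel 'I_m) :
  cycle_space F q e = (\sum_(w <- cyc_list q e) <<map_mx (intr : int -> F) w>>)%MS.
Proof.
rewrite /cyc_list big_flatten big_map /cycle_space.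
apply: eq_bigr => l _; rewrite big_map big_filter.
by apply: eq_bigr => c _; rewrite map_mxvec icvecE.
Qed.

Lemma rank_QFp m q (e : rel 'I_m) (F : fieldType) :
  (dim_cycle_space F q e <= dim_cycle_space rat q e)%N.
Proof.
by rewrite /dim_cycle_space !cycle_spaceE !rank_seq_map rank_map_int.
Qed.

Section Walks.
Variable K : fieldType.
Variable m : nat.
Implicit Types (x y : 'I_m) (s t : seq 'I_m).

Fixpoint wvec x s : 'M[K]_m :=
  if s is y :: t then oedge K x y + wvec y t else 0.

Lemma wvec_cat x s t : wvec x (s ++ t) = wvec x s + wvec (last x s) t.
Proof. by elim: s x => [|y s IH] x /=; rewrite ?add0r // IH addrA. Qed.

Lemma oedgexx x : oedge K x x = 0.
Proof. by rewrite /oedge subrr. Qed.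

Lemma oedgeC x y : oedge K y x = - oedge K x y.
Proof. by rewrite /oedge opprB. Qed.

Lemma wvec_sum y t :
  wvec y t = \sum_(i < size t) oedge K (nth y (y :: t) i) (nth y t i).
Proof.
elim: t y => [|z t IH] y /=; first by rewrite big_ord0.
rewrite big_ord_recl /= IH; congr (_ + _); apply: eq_bigr => i _ /=.
by rewrite add0n (set_nth_default y z (ltn_ord i)) (set_nth_default y z (ltnW (ltn_ord i) : (i < size (z :: t))%N)).
Qed.

Lemma cyc_sum x y t : last y t = x ->
  \sum_(i < (size t).+1) oedge K (nth x (y :: t) i) (nth x (y :: t) (i.+1 %% (size t).+1))
  = wvec x (y :: t).
Proof.
move=> hl; rewrite big_ord_recr modnn.
have -> : nth x (y :: t) (@ord_max (size t)) = x.
  by rewrite -hl -[nat_of_ord _]/((size (y :: t)).-1) nth_last.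
rewrite [wvec x _]/= addrC; congr (_ + _); rewrite wvec_sum; apply: eq_bigr => i _.
rewrite [nat_of_ord (widen_ord _ _)]/= modn_small ?ltnS // -[nth x (y :: t) i.+1]/(nth x t i).
by rewrite (set_nth_default y x (ltn_ord i)) (set_nth_default y x (ltnW (ltn_ord i) : (i < size (y :: t))%N)).
Qed.

Lemma cycle_vec_wvec x s : last x s = x -> (0 < size s)%N ->
  cycle_vec K (in_tuple s) = wvec x s.
Proof.
move=> hl hs; rewrite /cycle_vec.
under eq_bigr => i _ do rewrite (set_nth_default x _ (ltn_ord i)) (set_nth_default x _ (ltn_pmod _ hs)).
case: s hl hs => [|y t] // hl _.
exact: cyc_sum.
Qed.
Lemma not_uniq_split s : ~~ uniq s ->
  exists s1 y s2 s3, s = s1 ++ y :: s2 ++ y :: s3.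
Proof.
elim: s => [|z t IH] //=; rewrite negb_and negbK; case/orP.
  by case/splitPr => p1 p2; exists [::], z, p1, p2.
by case/IH => s1 [y [s2 [s3 ->]]]; exists (z :: s1), y, s2, s3.
Qed.

Variable e : rel 'I_m.

Lemma closed_walk q k x s : (size s <= k)%N -> path e x s -> last x s = x ->
  (size s <= q)%N -> (mxvec (wvec x s) <= cycle_space K q e)%MS.
Proof.
elim: k x s => [|k IH] x s.
  by case: s => //= _ _ _ _; rewrite linear0 sub0mx.
move=> hk hp hl hq.
case: (ltnP (size s) 3) => hs.
  suff -> : wvec x s = 0 by rewrite linear0 sub0mx.
  case: s hs hp hl {hk hq} => [|y [|z [|]]] //= _ _.
    by move=> ->; rewrite oedgexx addr0.
  by move=> ->; rewrite [oedge K y x]oedgeC addr0 subrr.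
case: (boolP (uniq s)) => hu.
  have hq1 : (size s < q.+1)%N by [].
  rewrite -(cycle_vec_wvec hl) ?(leq_trans _ hs) //.
  rewrite /cycle_space; apply: (sumsmx_sup (Ordinal hq1)) => //.
  apply: (sumsmx_sup (in_tuple s)); last by rewrite genmxE.
  rewrite /is_cycle /= hs hu /=.
  case: s {hk hq hs hq1 hu} hp hl => [|y t] //= /andP [hxy hp] hl.
  by rewrite rcons_path hp hl hxy.
case/not_uniq_split: hu => s1 [y [s2 [s3 es]]].
have -> : wvec x s = wvec x (s1 ++ y :: s3) + wvec y (rcons s2 y).
  rewrite es !wvec_cat /= -cats1 wvec_cat /= wvec_cat /= addr0.
  move: (wvec x s1) (oedge K (last x s1) y) (wvec y s2) (oedge K (last y s2) y) (wvec y s3).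
  move=> a b c d f; rewrite -!addrA; congr (_ + _); congr (_ + _).
  by rewrite addrA addrC.
move: hp hl hk hq; rewrite es size_cat /= size_cat /= => hp hl hk hq.
rewrite cat_path /= cat_path /= in hp.
case/and5P: hp => hp1 hy1 hp2 hy2 hp3.
rewrite linearD; apply: addmx_sub.
  apply: IH.
  - by rewrite size_cat /=; lia.
  - by rewrite cat_path /= hp1 hy1.
  - by move: hl; rewrite !last_cat /= last_cat /=.
  - by rewrite size_cat /=; lia.
apply: IH.
- by rewrite size_rcons; lia.
- by rewrite rcons_path hp2 hy2.
- by rewrite last_rcons.
- by rewrite size_rcons; lia.
Qed.

End Walks.

Lemma subB_sub (F : fieldType) k p n (a b : 'M[F]_(k, n)) (B : 'M_(p, n)) :
  (a <= B)%MS -> (b <= B)%MS -> (a - b <= B)%MS.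
Proof. by move=> ha hb; apply: addmx_sub => //; rewrite eqmx_opp. Qed.

Section Comb.
Variable K : fieldType.
Variable m : nat.
Variables (eG eH : rel 'I_m) (L1 L2 : nat).
Hypothesis symG : symmetric eG.
Hypothesis symH : symmetric eH.
Hypothesis hHG : forall u v, eH u v -> dist_le eG u v L1.
Hypothesis hGH : forall x y, eG x y -> dist_le eH x y L2.

Let q := (1 + 2 * L1 + L1 * L2)%N.

Lemma hex u v : exists s : seq 'I_m,
  eH u v ==> [&& (size s <= L1)%N, path eG u s & last u s == v].
Proof.
case: (boolP (eH u v)) => h; last by exists [::].
have [s [h1 h2 h3]] := hHG h; exists s; by rewrite h1 h2 h3 eqxx.
Qed.

Let g u v := xchoose (hex u v).

Lemma hg u v : eH u v -> [/\ (size (g u v) <= L1)%N, path eG u (g u v) & last u (g u v) = v].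
Proof.
move=> h; have := xchooseP (hex u v); move/implyP/(_ h)/and3P => [h1 h2 /eqP h3].
by split.
Qed.

Let C := cycle_space K q eG.
Let W := \matrix_(i < #|edges eH|)
   mxvec (wvec K (enum_val i).1 (g (enum_val i).1 (enum_val i).2)).
Let S := (C + W)%MS.

Lemma CS (a : 'rV[K]_(m * m)) : (a <= C)%MS -> (a <= S)%MS.
Proof. by move=> h; apply: submx_trans h (addsmxSl _ _). Qed.

Lemma claim1 u v : eH u v -> (mxvec (wvec K u (g u v)) <= S)%MS.
Proof.
move=> huv; have [s1 p1 l1] := hg huv.
case: (ltngtP u v) => c.
- have hin : (u, v) \in edges eH by rewrite inE /= huv c.
  apply: submx_trans (addsmxSr C W).
  have -> : mxvec (wvec K u (g u v)) = row (enum_rank_in hin (u, v)) W.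
    by rewrite rowK enum_rankK_in.
  exact: row_sub.
- have hvu : eH v u by rewrite symH.
  have [s2 p2 l2] := hg hvu.
  have hin : (v, u) \in edges eH by rewrite inE /= hvu c.
  have hcl : (mxvec (wvec K u (g u v ++ g v u)) <= C)%MS.
    apply: (@closed_walk K m eG q (size (g u v ++ g v u))) => //.
    - by rewrite cat_path p1 l1 p2.
    - by rewrite last_cat l1 l2.
    - rewrite size_cat /q; apply: leq_trans (leq_add s1 s2) _; lia.
  rewrite wvec_cat l1 in hcl.
  have -> : wvec K u (g u v) = (wvec K u (g u v) + wvec K v (g v u)) - wvec K v (g v u).
    by rewrite addrK.
  rewrite linearB /=; apply: subB_sub; first exact: CS.
  apply: submx_trans (addsmxSr C W).
  have -> : mxvec (wvec K v (g v u)) = row (enum_rank_in hin (v, u)) W.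
    by rewrite rowK enum_rankK_in.
  exact: row_sub.
- move/val_inj: c => c; subst v; apply: CS; apply: (@closed_walk K m eG q (size (g u u))) => //.
  apply: leq_trans s1 _; rewrite /q; lia.
Qed.

Fixpoint gw u (t : seq 'I_m) : seq 'I_m :=
  if t is v :: t' then g u v ++ gw v t' else [::].

Lemma gwP u t : path eH u t ->
  [/\ path eG u (gw u t), last u (gw u t) = last u t,
      (size (gw u t) <= L1 * size t)%N & (mxvec (wvec K u (gw u t)) <= S)%MS].
Proof.
elim: t u => [|v t IH] u /=.
  by move=> _; split => //; rewrite linear0 sub0mx.
case/andP => huv hp; have [s1 p1 l1] := hg huv.
have [p2 l2 s2 S2] := IH v hp.
split.
- by rewrite cat_path p1 l1.
- by rewrite last_cat l1.
- rewrite size_cat mulnS; exact: leq_add.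
- by rewrite wvec_cat l1 linearD /=; apply: addmx_sub => //; apply: claim1.
Qed.

Lemma claim3 x y : eG x y -> (mxvec (oedge K x y) <= S)%MS.
Proof.
move=> hxy; have hyx : eG y x by rewrite symG.
have [t [st pt lt]] := hGH hyx.
have [p2 l2 s2 S2] := gwP pt.
have hcl : (mxvec (wvec K x (y :: gw y t)) <= C)%MS.
  apply: (@closed_walk K m eG q (size (y :: gw y t))) => //=.
  - by rewrite hxy p2.
  - by rewrite l2 lt.
  - have h1 : (L1 * size t <= L1 * L2)%N by rewrite leq_mul2l st orbT.
    apply: leq_ltn_trans (leq_trans s2 h1) _; rewrite /q; lia.
have -> : oedge K x y = wvec K x (y :: gw y t) - wvec K y (gw y t).
  by rewrite /= addrK.
by rewrite linearB /=; apply: subB_sub => //; apply: CS.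
Qed.

Let A := \matrix_(i < #|edges eG|) mxvec (oedge K (enum_val i).1 (enum_val i).2).

Lemma rankA : \rank A = #|edges eG|.
Proof.
apply/eqP; change (row_free A); apply/row_freeP.
exists (\matrix_(k, j) (k == mxvec_index (enum_val j).1 (enum_val j).2)%:R).
apply/matrixP => i j; rewrite !mxE.
under eq_bigr => k _ do rewrite mxE [X in _ * X]mxE mulr_natr mulrb.
rewrite -big_mkcond /= big_pred1_eq.
rewrite mxvecE /oedge !mxE.
have hi := enum_valP i; have hj := enum_valP j.
rewrite -(inj_eq (@enum_val_inj _ (edges eG))).
move: (enum_val i) (enum_val j) hi hj => [a b] [c d]; rewrite !inE /=.
move=> /andP [_ hab] /andP [_ hcd].
have -> : (c == b) && (d == a) = false.
  apply/negbTE; apply/andP => -[/eqP ec /eqP ed]; subst; lia.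
by rewrite subr0 xpair_eqE (eq_sym c) (eq_sym d).
Qed.

Lemma comb_main : (#|edges eG| <= dim_cycle_space K q eG + #|edges eH|)%N.
Proof.
rewrite -rankA.
have hAS : (A <= S)%MS.
  apply/row_subP => i; rewrite rowK.
  have := enum_valP i; rewrite inE => /andP [h _]; exact: claim3.
apply: leq_trans (mxrankS hAS) _.
apply: leq_trans (mxrank_adds_leqif C W) _.
by rewrite leq_add2l rank_leq_row.
Qed.

End Comb.

Local Open Scope classical_set_scope.

Lemma einf_le (R : realType) (u v : nat -> \bar R) :
  (forall n, (u n <= v n)%E) -> (limn_einf u <= limn_einf v)%E.
Proof.
move=> uv; rewrite !limn_einf_lim; apply: lee_lim.
- exact: is_cvg_einfs.
- exact: is_cvg_einfs.
apply: nearW => n /=.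
apply: le_ereal_inf_tmp => _ [k /= nk <-].
apply: (@le_trans _ _ (u k)); last exact: uv.
by apply: ereal_inf_lbound; exists k.
Qed.

Lemma ratio_le (R : realType) (a b c d : nat) : (a <= b + c)%N ->
  ((a%:R - b%:R) / d%:R <= (c%:R / d%:R : R)).
Proof.
move=> h; apply: ler_wpM2r; first by rewrite invr_ge0 ler0n.
by rewrite lerBlDl -natrD ler_nat.
Qed.

Theorem proposition3 (R : realType) (N : nat -> nat) (G : adj_seq N)
    (p : nat) :
  is_graph_seq G -> prime p ->
  ((betaK R rat G <= betaK R 'F_p G)
   /\ (betaK R 'F_p G <= cost R G - 1%E))%E.
Proof.
move=> [symG irrG _ _] pp; split.
  apply: le_ereal_inf_tmp => _ [q _ <-].
  apply: (@le_trans _ _ (sq R rat G q)); first by apply: ereal_inf_lbound; exists q.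
  apply: leeB => //; apply: einf_le => n; rewrite lee_fin.
  apply: ler_wpM2r; first by rewrite invr_ge0 ler0n.
  by rewrite lerB // ler_nat rank_QFp.
rewrite leeBrDr //; apply: le_ereal_inf_tmp => _ [H [[symH _ _ _] [[L1 [_ hHG]] [L2 [_ hGH]]]] <-].
rewrite -leeBrDr //.
set q := (1 + 2*L1 + L1*L2)%N.
apply: (@le_trans _ _ (sq R 'F_p G q)); first by apply: ereal_inf_lbound; exists q.
apply: leeB => //; apply: einf_le => n; rewrite lee_fin.
apply: ratio_le; apply: comb_main; [exact: symG|exact: symH| |].
  move=> u v huv; rewrite -(muln1 L1); apply: hHG.
  by exists [:: v]; rewrite /= huv.
move=> u v huv; rewrite -(muln1 L2); apply: hGH.
by exists [:: v]; rewrite /= huv.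
Qed.
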